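(* There exists $r_0>0$ such that $\widehat{M}(r)\neq 0$ for all $r>r_0$, where $\widehat M$ is the function defined in the context.
   Context: For $r>\frac23$ let $u_b(r)\in(\frac65,\frac43)$ be the unique $u\in(\frac65,\frac43)$ with $2-u+2q(1-u)=0$ at $q=1+\sqrt{\frac{r+u-2}{r+0.1}}$. Set $q_{f,\pm}(r)=1\pm\sqrt{\frac{r}{r+0.1}}$, $q_{b,\pm}(r)=1\pm\sqrt{\frac{r+u_b(r)-2}{r+0.1}}$, $S(r)=(q_{f,+}-2q_{f,-})+(q_{b,+}-2q_{b,-})$, and let $(D_0(r),\mu_0(r))$ with $D_0(r)>0$ be the solution of $2+\mu=\tfrac12\sqrt{2D(r+0.1)}\,(q_{f,+}(r)-2q_{f,-}(r))$, $u_b(r)+\mu=-\tfrac12\sqrt{2D(r+0.1)}\,(q_{b,+}(r)-2q_{b,-}(r))$, i.e. $D_0=\frac{2(2-u_b)^2}{(r+0.1)S^2}$, $\mu_0=-2+\frac{(2-u_b)(q_{f,+}-2q_{f,-})}{S}$. Let $\phi(\chi)=\big(1+e^{-\frac{\sqrt2}{2}\chi}\big)^{-1}$, and for $j\in\{f,b\}$ let $\kappa_j=\frac12-\frac{q_{j,-}}{q_{j,+}}$, $I_j=\int_{-\infty}^{\infty}e^{-\sqrt2\kappa_j\chi}\phi'(\chi)^2d\chi$, $J_j^{(m)}=\int_{-\infty}^{\infty}e^{-\sqrt2\kappa_j\chi}\phi'(\chi)\phi(\chi)^m d\chi$ ($m=1,2,3$), all quantities depending on $r$. Define $\widehat M_f=-\frac{q_{f,+}D_0\sqrt2(q_{f,+}-2q_{f,-})}{2(\mu_0+2)}I_f$,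 $M_f=\frac{q_{f,+}}{2}\sqrt2(q_{f,+}-2q_{f,-})I_f+\frac{0.1}{r+0.1}J_f^{(1)}-2q_{f,+}J_f^{(2)}+q_{f,+}^2J_f^{(3)}$, $\widehat M_b=-\frac{q_{b,+}\sqrt2(q_{b,+}-2q_{b,-})}{2(\mu_0+u_b)}I_b$, $M_b=-\frac{q_{b,+}}{2}\sqrt2(q_{b,+}-2q_{b,-})I_b+\frac{u_b-2.1}{r+0.1}J_b^{(1)}+2q_{b,+}J_b^{(2)}-q_{b,+}^2J_b^{(3)}$, and $\widehat M(r)=\frac{M_b(r)}{\widehat M_b(r)}-\frac{M_f(r)}{\widehat M_f(r)}$. ($\widehat M$ is, up to a nonzero factor, the determinant of the Jacobian with respect to $(D,\mu)$ of the Melnikov functions measuring the splitting of the front and back connections in the Barkley traveling-wave system.) *)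

(* Defs.v *)
From Stdlib Require Import Reals Lra ClassicalEpsilon.
From Coquelicot Require Import Coquelicot.
Open Scope R_scope.

(* u_b(r): the (unique) u in (6/5,4/3) with 2-u+2q(1-u)=0, q = 1+sqrt((r+u-2)/(r+0.1)).
   Chosen by Hilbert's epsilon; the context asserts existence and uniqueness for r>2/3. *)
Definition ub_prop (r u : R) : Prop :=
  6/5 < u < 4/3 /\
  2 - u + 2 * (1 + sqrt ((r + u - 2) / (r + 1/10))) * (1 - u) = 0.

Definition ub (r : R) : R := epsilon (inhabits 0) (ub_prop r).

Definition qfp (r : R) : R := 1 + sqrt (r / (r + 1/10)).
Definition qfm (r : R) : R := 1 - sqrt (r / (r + 1/10)).
Definition qbp (r : R) : R := 1 + sqrt ((r + ub r - 2) / (r + 1/10)).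
Definition qbm (r : R) : R := 1 - sqrt ((r + ub r - 2) / (r + 1/10)).

Definition Sr (r : R) : R := (qfp r - 2 * qfm r) + (qbp r - 2 * qbm r).

Definition D0 (r : R) : R := 2 * (2 - ub r) ^ 2 / ((r + 1/10) * Sr r ^ 2).
Definition mu0 (r : R) : R := -2 + (2 - ub r) * (qfp r - 2 * qfm r) / Sr r.

Definition phi (x : R) : R := / (1 + exp (- (sqrt 2 / 2) * x)).

Definition kappa_f (r : R) : R := 1/2 - qfm r / qfp r.
Definition kappa_b (r : R) : R := 1/2 - qbm r / qbp r.

Definition Iint (k : R) : R :=
  RInt_gen (fun x => exp (- sqrt 2 * k * x) * (Derive phi x) ^ 2)
           (Rbar_locally m_infty) (Rbar_locally p_infty).
Definition Jint (k : R) (m : nat) : R :=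
  RInt_gen (fun x => exp (- sqrt 2 * k * x) * Derive phi x * phi x ^ m)
           (Rbar_locally m_infty) (Rbar_locally p_infty).

Definition Mhat_f (r : R) : R :=
  - (qfp r * D0 r * sqrt 2 * (qfp r - 2 * qfm r)) / (2 * (mu0 r + 2)) * Iint (kappa_f r).
Definition M_f (r : R) : R :=
  qfp r / 2 * sqrt 2 * (qfp r - 2 * qfm r) * Iint (kappa_f r)
  + (1/10) / (r + 1/10) * Jint (kappa_f r) 1
  - 2 * qfp r * Jint (kappa_f r) 2
  + qfp r ^ 2 * Jint (kappa_f r) 3.
Definition Mhat_b (r : R) : R :=
  - (qbp r * sqrt 2 * (qbp r - 2 * qbm r)) / (2 * (mu0 r + ub r)) * Iint (kappa_b r).
Definition M_b (r : R) : R :=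
  - (qbp r / 2) * sqrt 2 * (qbp r - 2 * qbm r) * Iint (kappa_b r)
  + (ub r - 21/10) / (r + 1/10) * Jint (kappa_b r) 1
  + 2 * qbp r * Jint (kappa_b r) 2
  - qbp r ^ 2 * Jint (kappa_b r) 3.

Definition Mhat (r : R) : R := M_b r / Mhat_b r - M_f r / Mhat_f r.

(* Main.v *)
Require Import Defs.
From Stdlib Require Import Reals Lra Psatz FunctionalExtensionality ClassicalEpsilon.
From Coquelicot Require Import Coquelicot.
Open Scope R_scope.

Definition aa := sqrt 2 / 2.

Lemma aa_pos : 0 < aa.
Proof. unfold aa. assert (0 < sqrt 2) by (apply sqrt_lt_R0; lra). lra. Qed.

Lemma phi_bounds x : 0 < phi x < 1.
Proof.
  unfold phi. assert (0 < exp (- (sqrt 2 / 2) * x)) by apply exp_pos.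
  split. apply Rinv_0_lt_compat; lra.
  rewrite <- Rinv_1. apply Rinv_lt_contravar; lra.
Qed.

Lemma is_derive_phi x : is_derive phi x (aa * phi x * (1 - phi x)).
Proof.
  unfold phi, aa. auto_derive.
  - assert (0 < exp (- (sqrt 2 / 2) * x)) by apply exp_pos. lra.
  - assert (0 < exp (- (sqrt 2 / 2) * x)) by apply exp_pos. field. lra.
Qed.

Lemma Derive_phi_eq : Derive phi = fun x => aa * phi x * (1 - phi x).
Proof. apply functional_extensionality; intro x. apply is_derive_unique, is_derive_phi. Qed.

Lemma ex_derive_phi x : ex_derive phi x.
Proof. eexists; apply is_derive_phi. Qed.

Definition gg (k : R) (m : nat) := fun x => exp (- sqrt 2 * k * x) * Derive phi x * phi x ^ m.
Definition FF (k : R) (j : nat) := fun x => exp (- sqrt 2 * k * x) * phi x ^ j * (1 - phi x).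

Lemma FF_derive k j x : (1 <= j)%nat ->
  is_derive (FF k j) x ((INR j - 2*k) * gg k (j-1) x - (INR j + 1) * gg k j x).
Proof.
  intro Hj. destruct j as [|j]; [lia|]. unfold FF, gg. auto_derive.
  - change (fun x0 => phi x0) with phi. split; [apply ex_derive_phi|split; [apply ex_derive_phi|exact I]].
  - change (fun x0 => phi x0) with phi. rewrite Derive_phi_eq.
    replace (Init.Nat.pred (S j)) with j by reflexivity.
    replace (S j - 1)%nat with j by lia. change (match j with 0%nat => 1 | S _ => INR j + 1 end) with (INR (S j)). rewrite !S_INR. replace (phi x ^ S j) with (phi x * phi x ^ j) by reflexivity. unfold aa.
    field.
Qed.
Lemma ball_R (x y e : R) : Rabs (y - x) < e -> ball x e y.
Proof. intros H. exact H. Qed.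

Lemma gen_exist (f : R -> R) (M : R) :
  (forall x, continuous f x) -> (forall x, 0 <= f x) ->
  (forall a b, a <= b -> RInt f a b <= M) ->
  exists l, is_RInt_gen f (Rbar_locally m_infty) (Rbar_locally p_infty) l
            /\ RInt f 0 1 <= l.
Proof.
  intros Hc Hp HM.
  set (F := fun x => RInt f 0 x).
  assert (Hex : forall a b, ex_RInt f a b).
  { intros a b. apply (@ex_RInt_continuous R_CompleteNormedModule). intros; apply Hc. }
  assert (Hd : forall x, is_derive F x (f x)).
  { intro x. apply (is_derive_RInt f F 0 x); [|apply Hc].
    apply filter_forall. intro b. unfold F. apply (@RInt_correct R_CompleteNormedModule). apply Hex. }
  assert (HDF : forall x, Derive F x = f x).
  { intro x. apply is_derive_unique, Hd. }
  assert (Hch : forall x y, F y - F x = RInt f x y).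
  { intros x y. unfold F. rewrite <- (RInt_Chasles f 0 x y) by apply Hex.
    unfold plus; simpl; ring. }
  assert (Hmono : forall x y, x <= y -> F x <= F y).
  { intros x y Hxy. assert (0 <= RInt f x y) by (apply RInt_ge_0; auto).
    rewrite <- Hch in H. lra. }
  assert (HF0 : F 0 = 0).
  { unfold F. rewrite RInt_point. reflexivity. }
  assert (Hup : forall x, F x <= M).
  { intro x. destruct (Rle_dec 0 x).
    - rewrite <- (Rminus_0_r (F x)), <- HF0, Hch. apply HM; auto.
    - specialize (HM 0 0 (Rle_refl 0)). replace (RInt f 0 0) with 0 in HM by (rewrite RInt_point; reflexivity).
      assert (F x <= F 0) by (apply Hmono; lra). lra. }
  assert (Hlo : forall x, - M <= F x).
  { intro x. destruct (Rle_dec 0 x).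
    - specialize (HM 0 0 (Rle_refl 0)). replace (RInt f 0 0) with 0 in HM by (rewrite RInt_point; reflexivity).
      assert (F 0 <= F x) by (apply Hmono; lra). lra.
    - assert (RInt f x 0 <= M) by (apply HM; lra). rewrite <- Hch, HF0 in H. lra. }
  destruct (completeness (fun y => exists x, y = F x)) as [Lp HLp].
  { exists M. intros y [x ->]. apply Hup. }
  { exists (F 0). exists 0. reflexivity. }
  destruct (completeness (fun y => exists x, y = - F x)) as [Lm HLm].
  { exists M. intros y [x ->]. specialize (Hlo x). lra. }
  { exists (- F 0). exists 0. reflexivity. }
  assert (HLp1 : forall x, F x <= Lp) by (intro x; apply HLp; exists x; reflexivity).
  assert (HLm1 : forall x, - F x <= Lm) by (intro x; apply HLm; exists x; reflexivity).
  exists (Lp - - Lm). split.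
  - apply (is_RInt_gen_ext (Derive F)).
    { apply filter_forall. intros ab x _. apply HDF. }
    apply is_RInt_gen_Derive.
    + apply filter_forall. intros ab x _. exists (f x). apply Hd.
    + apply filter_forall. intros ab x _.
      replace (Derive F) with f by (apply functional_extensionality; intro; rewrite HDF; reflexivity).
      apply Hc.
    + apply filterlim_locally. intro eps.
      destruct (Rlt_dec (-Lm) (-Lm + eps)) as [_|n]; [|destruct eps; simpl in n; lra].
      assert (exists x0, - F x0 > Lm - eps) as [x0 Hx0].
      { apply Classical_Prop.NNPP. intro Hn.
        assert (is_upper_bound (fun y => exists x, y = - F x) (Lm - eps)).
        { intros y [x ->]. apply Rnot_lt_le. intro; apply Hn; exists x; lra. }
        apply HLm in H. destruct eps; simpl in H; lra. }
      exists x0. intros x Hx. apply ball_R.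
      assert (F x <= F x0) by (apply Hmono; lra). specialize (HLm1 x).
      apply Rabs_lt_between'. lra.
    + apply filterlim_locally. intro eps.
      assert (exists x0, F x0 > Lp - eps) as [x0 Hx0].
      { apply Classical_Prop.NNPP. intro Hn.
        assert (is_upper_bound (fun y => exists x, y = F x) (Lp - eps)).
        { intros y [x ->]. apply Rnot_lt_le. intro; apply Hn; exists x; lra. }
        apply HLp in H. destruct eps; simpl in H; lra. }
      exists x0. intros x Hx. apply ball_R.
      assert (F x0 <= F x) by (apply Hmono; lra). specialize (HLp1 x).
      apply Rabs_lt_between'. lra.
  - specialize (HLp1 1). specialize (HLm1 0). rewrite HF0 in HLm1. unfold F in *. lra.
Qed.

Ltac phi_side := repeat (match goal with
  | |- _ /\ _ => split
  | |- True => exact I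
  | |- ex_derive _ _ => apply ex_derive_phi
  end).

Lemma gg_cont k m x : continuous (gg k m) x.
Proof.
  apply (@ex_derive_continuous R_AbsRing R_NormedModule). unfold gg. rewrite Derive_phi_eq. auto_derive. phi_side.
Qed.

Lemma phi_le_exp x : phi x <= exp (aa * x).
Proof.
  unfold phi, aa. set (E := exp (- (sqrt 2 / 2) * x)).
  assert (HE : 0 < E) by apply exp_pos.
  assert (H1 : E * exp (sqrt 2 / 2 * x) = 1).
  { unfold E. rewrite <- exp_plus. replace (- (sqrt 2 / 2) * x + sqrt 2 / 2 * x) with 0 by ring. apply exp_0. }
  assert (0 < exp (sqrt 2 / 2 * x)) by apply exp_pos.
  apply (Rmult_le_reg_l (1 + E)); [lra|]. rewrite Rinv_r by lra. rewrite Rmult_plus_distr_r, H1. lra.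
Qed.

Lemma one_minus_phi_le x : 1 - phi x <= exp (- aa * x).
Proof.
  unfold phi, aa. set (E := exp (- (sqrt 2 / 2) * x)).
  assert (HE : 0 < E) by apply exp_pos.
  replace (1 - / (1 + E)) with (E / (1 + E)) by (field; lra).
  apply (Rmult_le_reg_l (1 + E)); [lra|]. replace ((1 + E) * (E / (1 + E))) with E by (field; lra). assert (0 <= E * E) by (apply Rmult_le_pos; lra). lra.
Qed.

Lemma lim_p0 (f : R -> R) : (forall x, 0 < x -> Rabs (f x) <= exp (- aa * x)) ->
  filterlim f (Rbar_locally p_infty) (locally 0).
Proof.
  intro H. apply filterlim_locally. intro eps. destruct eps as [e He]. simpl.
  exists (Rmax 0 (- ln e / aa)). intros x Hx. apply ball_R.
  assert (Ha := aa_pos).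
  assert (H0 : 0 < x) by (eapply Rle_lt_trans; [apply Rmax_l|exact Hx]).
  assert (H1 : - ln e / aa < x) by (eapply Rle_lt_trans; [apply Rmax_r|exact Hx]).
  rewrite Rminus_0_r. eapply Rle_lt_trans; [apply H; exact H0|].
  rewrite <- (exp_ln e He). apply exp_increasing.
  apply (Rmult_lt_compat_l aa) in H1; [|exact Ha]. replace (aa * (- ln e / aa)) with (- ln e) in H1 by (field; lra). lra.
Qed.

Lemma lim_m0 (f : R -> R) : (forall x, x < 0 -> Rabs (f x) <= exp (aa * x)) ->
  filterlim f (Rbar_locally m_infty) (locally 0).
Proof.
  intro H. apply filterlim_locally. intro eps. destruct eps as [e He]. simpl.
  exists (Rmin 0 (ln e / aa)). intros x Hx. apply ball_R.
  assert (Ha := aa_pos).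
  assert (H0 : x < 0) by (eapply Rlt_le_trans; [exact Hx|apply Rmin_l]).
  assert (H1 : x < ln e / aa) by (eapply Rlt_le_trans; [exact Hx|apply Rmin_r]).
  rewrite Rminus_0_r. eapply Rle_lt_trans; [apply H; exact H0|].
  rewrite <- (exp_ln e He). apply exp_increasing.
  apply (Rmult_lt_compat_l aa) in H1; [|exact Ha]. replace (aa * (ln e / aa)) with (ln e) in H1 by (field; lra). lra.
Qed.

Lemma lin_comb (f g h : R -> R) (lf lg c d : R) :
  is_RInt_gen f (Rbar_locally m_infty) (Rbar_locally p_infty) lf ->
  is_RInt_gen g (Rbar_locally m_infty) (Rbar_locally p_infty) lg ->
  (forall x, h x = c * f x + d * g x) ->
  is_RInt_gen h (Rbar_locally m_infty) (Rbar_locally p_infty) (c * lf + d * lg).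
Proof.
  intros Hf Hg Hh.
  assert (H1 := @is_RInt_gen_scal R_NormedModule _ _ _ _ f c lf Hf).
  assert (H2 := @is_RInt_gen_scal R_NormedModule _ _ _ _ g d lg Hg).
  assert (H3 := @is_RInt_gen_plus R_NormedModule _ _ _ _ _ _ _ _ H1 H2).
  assert (E : h = (fun y : R => plus (scal c (f y)) (scal d (g y)))).
  { apply functional_extensionality. intro x. rewrite Hh. reflexivity. }
  rewrite E. exact H3.
Qed.

Lemma gg_pos k m x : 0 < gg k m x.
Proof.
  unfold gg. rewrite Derive_phi_eq. destruct (phi_bounds x). assert (Ha := aa_pos).
  apply Rmult_lt_0_compat; [apply Rmult_lt_0_compat|apply pow_lt; lra].
  apply exp_pos. apply Rmult_lt_0_compat; [apply Rmult_lt_0_compat|]; lra.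
Qed.

Lemma w_bound3 k x : 0 <= k <= 1/2 -> 0 <= x -> exp (- sqrt 2 * k * x) <= 1.
Proof.
  intros Hk Hx. assert (Hs : 0 < sqrt 2) by (apply sqrt_lt_R0; lra).
  rewrite <- exp_0. replace (- sqrt 2 * k * x) with (- (sqrt 2 * k * x)) by ring.
  assert (0 <= sqrt 2 * k * x) by (apply Rmult_le_pos; [apply Rmult_le_pos|]; lra).
  destruct (Req_dec (sqrt 2 * k * x) 0) as [->|]. rewrite Ropp_0; lra.
  left. apply exp_increasing. lra.
Qed.

Lemma w_bound2 k x : 0 <= k <= 1/2 -> x < 0 -> exp (- sqrt 2 * k * x) <= exp (- aa * x).
Proof.
  intros Hk Hx. assert (Hs : 0 < sqrt 2) by (apply sqrt_lt_R0; lra).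
  assert (0 <= sqrt 2 * (1/2 - k) * (- x)) by (apply Rmult_le_pos; [apply Rmult_le_pos|]; lra).
  replace (- aa * x) with (- sqrt 2 * k * x + sqrt 2 * (1/2 - k) * (- x)) by (unfold aa; field).
  destruct (Req_dec (sqrt 2 * (1/2 - k) * (- x)) 0) as [->|]. rewrite Rplus_0_r; lra.
  left. apply exp_increasing. lra.
Qed.

Lemma w_bound k x : 0 <= k <= 1/2 -> exp (- sqrt 2 * k * x) <= 1 + exp (- aa * x).
Proof.
  intros Hk. assert (0 < exp (- aa * x)) by apply exp_pos.
  destruct (Rle_dec 0 x).
  - assert (H1 := w_bound3 k x Hk r). lra.
  - assert (H1 := w_bound2 k x Hk ltac:(lra)). lra.
Qed.

Lemma J1_exists k : 0 <= k <= 1/2 ->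
  exists l, is_RInt_gen (gg k 1) (Rbar_locally m_infty) (Rbar_locally p_infty) l /\ 0 < l.
Proof.
  intros Hk.
  destruct (gen_exist (gg k 1) 1) as [l [Hl Hl1]].
  - apply gg_cont.
  - intro x. left. apply gg_pos.
  - intros a b Hab.
    assert (Hd : forall x, Rmin a b <= x <= Rmax a b -> is_derive phi x (aa * phi x * (1 - phi x))) by (intros; apply is_derive_phi).
    assert (Hcd : forall x, Rmin a b <= x <= Rmax a b -> continuous (fun x => aa * phi x * (1 - phi x)) x).
    { intros x _. apply (@ex_derive_continuous R_AbsRing R_NormedModule). auto_derive. phi_side. }
    assert (HI := is_RInt_derive phi (fun x => aa * phi x * (1 - phi x)) a b Hd Hcd).
    apply is_RInt_unique in HI.
    eapply Rle_trans.
    + apply (RInt_le _ (fun x => aa * phi x * (1 - phi x))); [exact Hab| | |].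
      * apply (@ex_RInt_continuous R_CompleteNormedModule). intros; apply gg_cont.
      * apply (@ex_RInt_continuous R_CompleteNormedModule). intros; apply Hcd; auto.
      * intros x _. unfold gg. rewrite Derive_phi_eq. destruct (phi_bounds x). assert (Ha := aa_pos).
        assert (Hw := w_bound k x Hk).
        assert (Hp : phi x * (1 + exp (- aa * x)) = 1).
        { unfold phi, aa. assert (0 < exp (- (sqrt 2 / 2) * x)) by apply exp_pos. field. lra. }
        assert (0 < aa * phi x * (1 - phi x)) by (apply Rmult_lt_0_compat; [apply Rmult_lt_0_compat|]; lra).
        simpl. rewrite Rmult_1_r.
        assert (exp (- sqrt 2 * k * x) * phi x <= 1) by nra. nra.
    + rewrite HI. unfold minus, plus, opp; simpl. destruct (phi_bounds a), (phi_bounds b). lra.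
  - exists l. split; [exact Hl|]. eapply Rlt_le_trans; [|exact Hl1].
    apply RInt_gt_0; [lra| |]. intros; apply gg_pos. intros; apply gg_cont.
Qed.

Lemma pow_le_1 p j : 0 <= p <= 1 -> p ^ j <= 1.
Proof.
  intros Hp. induction j; simpl; [lra|].
  assert (0 <= p ^ j) by (apply pow_le; lra).
  replace 1 with (1 * 1) by ring. apply Rmult_le_compat; lra.
Qed.

Lemma FF_pos k j x : 0 < FF k j x.
Proof.
  unfold FF. destruct (phi_bounds x).
  apply Rmult_lt_0_compat; [apply Rmult_lt_0_compat|]; [apply exp_pos|apply pow_lt|]; lra.
Qed.

Lemma FF_p_bound k j x : 0 <= k <= 1/2 -> 0 < x -> Rabs (FF k j x) <= exp (- aa * x).
Proof.
  intros Hk Hx. rewrite Rabs_pos_eq by (left; apply FF_pos).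
  unfold FF. destruct (phi_bounds x).
  assert (H1 := w_bound3 k x Hk ltac:(lra)).
  assert (H2 : phi x ^ j <= 1) by (apply pow_le_1; lra).
  assert (H3 := one_minus_phi_le x).
  assert (0 < phi x ^ j) by (apply pow_lt; lra).
  assert (0 < exp (- sqrt 2 * k * x)) by apply exp_pos.
  replace (exp (- aa * x)) with (1 * 1 * exp (- aa * x)) by ring.
  apply Rmult_le_compat; try lra.
  - apply Rmult_le_pos; lra.
  - apply Rmult_le_compat; lra.
Qed.

Lemma FF_m_bound k j x : 0 <= k <= 1/2 -> (2 <= j)%nat -> x < 0 -> Rabs (FF k j x) <= exp (aa * x).
Proof.
  intros Hk Hj Hx. rewrite Rabs_pos_eq by (left; apply FF_pos).
  unfold FF. destruct (phi_bounds x).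
  destruct j as [|[|j]]; [lia|lia|].
  assert (H1 := w_bound2 k x Hk Hx).
  assert (H2 : phi x ^ j <= 1) by (apply pow_le_1; lra).
  assert (H3 := phi_le_exp x).
  assert (0 < phi x ^ j) by (apply pow_lt; lra).
  assert (0 < exp (- sqrt 2 * k * x)) by apply exp_pos.
  replace (phi x ^ S (S j)) with (phi x * phi x * phi x ^ j) by (simpl; ring).
  set (e1 := exp (- aa * x)) in *. set (e2 := exp (aa * x)) in *. set (w := exp (- sqrt 2 * k * x)) in *.
  assert (E : e1 * (e2 * e2) = e2).
  { unfold e1, e2. rewrite <- !exp_plus. f_equal. ring. }
  assert (0 < e2) by apply exp_pos.
  assert (0 <= phi x * phi x) by (apply Rmult_le_pos; lra).
  assert (A1 : phi x * phi x <= e2 * e2) by (apply Rmult_le_compat; lra).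
  assert (A2 : phi x * phi x * phi x ^ j <= e2 * e2).
  { rewrite <- (Rmult_1_r (e2 * e2)). apply Rmult_le_compat; lra. }
  assert (0 <= phi x * phi x * phi x ^ j) by (apply Rmult_le_pos; lra).
  assert (A3 : w * (phi x * phi x * phi x ^ j) <= e1 * (e2 * e2)) by (apply Rmult_le_compat; lra).
  assert (0 <= w * (phi x * phi x * phi x ^ j)) by (apply Rmult_le_pos; lra).
  assert (A4 : w * (phi x * phi x * phi x ^ j) * (1 - phi x) <= e1 * (e2 * e2) * 1) by (apply Rmult_le_compat; lra).
  rewrite E, Rmult_1_r in A4. exact A4.
Qed.

Lemma FF_int k j : 0 <= k <= 1/2 -> (2 <= j)%nat ->
  is_RInt_gen (fun x => (INR j - 2*k) * gg k (j-1) x - (INR j + 1) * gg k j x)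
     (Rbar_locally m_infty) (Rbar_locally p_infty) 0.
Proof.
  intros Hk Hj.
  assert (HD : Derive (FF k j) = fun x => (INR j - 2*k) * gg k (j-1) x - (INR j + 1) * gg k j x).
  { apply functional_extensionality. intro x. apply is_derive_unique, FF_derive. lia. }
  rewrite <- HD. replace 0 with (0 - 0) by ring.
  apply is_RInt_gen_Derive.
  - apply filter_forall. intros ab x _. eexists. apply FF_derive. lia.
  - apply filter_forall. intros ab x _. rewrite HD.
    apply (continuous_minus (U:=R_UniformSpace) (K:=R_AbsRing) (V:=R_NormedModule) (fun x => scal (INR j - 2*k) (gg k (j-1) x)) (fun x => scal (INR j + 1) (gg k j x)));
    apply (continuous_scal_r (U:=R_UniformSpace) (K:=R_AbsRing) (V:=R_NormedModule)); apply gg_cont.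
  - apply lim_m0. intros x Hx. apply FF_m_bound; auto.
  - apply lim_p0. intros x Hx. apply FF_p_bound; auto.
Qed.

Lemma int_facts k : 0 <= k <= 1/2 ->
  0 < Jint k 1 /\ Jint k 2 = (2 - 2*k)/3 * Jint k 1 /\
  Jint k 3 = (3 - 2*k)/4 * Jint k 2 /\ Iint k = (Jint k 1 - Jint k 2) / sqrt 2.
Proof.
  intros Hk.
  destruct (J1_exists k Hk) as [l [Hl Hpos]].
  assert (H2 := lin_comb (gg k 1) _ (gg k 2) l 0 ((2 - 2*k)/3) (-1/3) Hl (FF_int k 2 Hk ltac:(lia))).
  assert (H2' : is_RInt_gen (gg k 2) (Rbar_locally m_infty) (Rbar_locally p_infty) ((2 - 2*k)/3 * l + -1/3 * 0)).
  { apply H2. intro x. simpl. field. }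
  clear H2.
  assert (H3 := lin_comb (gg k 2) _ (gg k 3) _ 0 ((3 - 2*k)/4) (-1/4) H2' (FF_int k 3 Hk ltac:(lia))).
  assert (H3' : is_RInt_gen (gg k 3) (Rbar_locally m_infty) (Rbar_locally p_infty) ((3 - 2*k)/4 * ((2 - 2*k)/3 * l + -1/3 * 0) + -1/4 * 0)).
  { apply H3. intro x. simpl. field. }
  clear H3.
  assert (HI := lin_comb (gg k 1) (gg k 2) (fun x => exp (- sqrt 2 * k * x) * Derive phi x ^ 2) _ _ aa (-aa) Hl H2').
  assert (HI' : is_RInt_gen (fun x => exp (- sqrt 2 * k * x) * Derive phi x ^ 2) (Rbar_locally m_infty) (Rbar_locally p_infty) (aa * l + - aa * ((2 - 2*k)/3 * l + -1/3 * 0))).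
  { apply HI. intro x. unfold gg. rewrite Derive_phi_eq. simpl. ring. }
  clear HI.
  assert (E1 : Jint k 1 = l).
  { change (Jint k 1) with (RInt_gen (gg k 1) (Rbar_locally m_infty) (Rbar_locally p_infty)).
    apply is_RInt_gen_unique, Hl. }
  assert (E2 : Jint k 2 = (2 - 2*k)/3 * l + -1/3 * 0).
  { change (Jint k 2) with (RInt_gen (gg k 2) (Rbar_locally m_infty) (Rbar_locally p_infty)).
    apply is_RInt_gen_unique, H2'. }
  assert (E3 : Jint k 3 = (3 - 2*k)/4 * ((2 - 2*k)/3 * l + -1/3 * 0) + -1/4 * 0).
  { change (Jint k 3) with (RInt_gen (gg k 3) (Rbar_locally m_infty) (Rbar_locally p_infty)).
    apply is_RInt_gen_unique, H3'. }
  assert (EI : Iint k = aa * l + - aa * ((2 - 2*k)/3 * l + -1/3 * 0)).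
  { unfold Iint. apply is_RInt_gen_unique, HI'. }
  assert (Hs : sqrt 2 * sqrt 2 = 2) by (apply sqrt_sqrt; lra).
  assert (Hs0 : 0 < sqrt 2) by (apply sqrt_lt_R0; lra).
  rewrite E1, E2, E3, EI. unfold aa. repeat split.
  - exact Hpos.
  - ring.
  - ring.
  - assert (Hinv : / sqrt 2 = sqrt 2 / 2).
    { apply (Rmult_eq_reg_l (sqrt 2)); [|lra]. rewrite Rinv_r by lra.
      replace (sqrt 2 * (sqrt 2 / 2)) with (sqrt 2 * sqrt 2 / 2) by field. rewrite Hs. field. }
    unfold Rdiv at 5. rewrite Hinv. field.
Qed.

Lemma sqrt_facts x : 0 < x -> 0 < sqrt x /\ sqrt x * sqrt x = x.
Proof. intros. split. apply sqrt_lt_R0; lra. apply sqrt_sqrt; lra. Qed.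

Lemma ub_spec r : 10 <= r -> ub_prop r (ub r).
Proof.
  intro Hr. unfold ub. apply epsilon_spec.
  set (g := fun u => - (2 - u + 2 * (1 + sqrt ((r + u - 2) / (r + 1/10))) * (1 - u))).
  assert (Hpos : forall u, 1 <= u -> 0 < (r + u - 2) / (r + 1/10)).
  { intros u Hu. apply Rdiv_lt_0_compat; lra. }
  assert (Hlt1 : forall u, u <= 2 -> (r + u - 2) / (r + 1/10) < 1).
  { intros u Hu. apply (Rmult_lt_reg_r (r + 1/10)); [lra|]. unfold Rdiv. rewrite Rmult_assoc, Rinv_l by lra. lra. }
  assert (Hivt : {z | 6/5 <= z <= 4/3 /\ g z = 0}).
  { apply Ranalysis5.IVT_interv.
  - intros a Ha. apply continuity_pt_filterlim.
    apply (@ex_derive_continuous R_AbsRing R_NormedModule). unfold g. auto_derive.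
    apply (Hpos a); lra.
  - lra.
  - unfold g. destruct (sqrt_facts _ (Hpos (6/5) ltac:(lra))) as [H1 H2].
    assert (H3 := Hlt1 (6/5) ltac:(lra)). nra.
  - unfold g. destruct (sqrt_facts _ (Hpos (4/3) ltac:(lra))) as [H1 H2]. nra. }
  destruct Hivt as [z [Hz Hgz]].
  exists z. unfold ub_prop. split.
    + split.
      * destruct (Req_dec z (6/5)) as [->|]; [|lra].
        exfalso. unfold g in Hgz. destruct (sqrt_facts _ (Hpos (6/5) ltac:(lra))) as [H1 H2].
        assert (H3 := Hlt1 (6/5) ltac:(lra)). nra.
      * destruct (Req_dec z (4/3)) as [->|]; [|lra].
        exfalso. unfold g in Hgz. destruct (sqrt_facts _ (Hpos (4/3) ltac:(lra))) as [H1 H2]. nra.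
    + unfold g in Hgz. lra.
Qed.

Lemma div_bounds a d lo hi : 0 < d -> lo * d <= a -> a < hi * d -> lo <= a / d < hi.
Proof.
  intros Hd H1 H2. assert (0 < / d) by (apply Rinv_0_lt_compat; lra). unfold Rdiv. split.
  - replace lo with (lo * d * / d) by (field; lra). apply Rmult_le_compat_r; lra.
  - replace hi with (hi * d * / d) by (field; lra). apply Rmult_lt_compat_r; lra.
Qed.

Theorem theorem2 : exists r0 : R, 0 < r0 /\ forall r : R, r0 < r -> Mhat r <> 0.
Proof.
  exists 10. split; [lra|]. intros r Hr.
  destruct (ub_spec r ltac:(lra)) as [[Hu1 Hu2] _].
  assert (Hr1 : 0 < r + 1/10) by lra.
  destruct (sqrt_facts (r / (r + 1/10))) as [Hx0 Hxx]. { apply Rdiv_lt_0_compat; lra. }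
  destruct (sqrt_facts ((r + ub r - 2) / (r + 1/10))) as [Hy0 Hyy]. { apply Rdiv_lt_0_compat; lra. }
  assert (Hxb : 81/100 <= r / (r + 1/10) < 1).
  { apply div_bounds; lra. }
  assert (Hyb : 81/100 <= (r + ub r - 2) / (r + 1/10) < 1).
  { apply div_bounds; lra. }
  unfold Mhat, M_b, Mhat_b, M_f, Mhat_f.
  set (x := sqrt (r / (r + 1/10))) in *.
  set (y := sqrt ((r + ub r - 2) / (r + 1/10))) in *.
  set (u := ub r) in *.
  assert (Hx : 9/10 <= x < 1) by (split; nra).
  assert (Hy : 9/10 <= y < 1) by (split; nra).
  assert (Ekf : kappa_f r = 1/2 - (1 - x) / (1 + x)) by reflexivity.
  assert (Ekb : kappa_b r = 1/2 - (1 - y) / (1 + y)) by reflexivity.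
  assert (Hkf : 0 <= kappa_f r <= 1/2).
  { rewrite Ekf. split; apply (Rmult_le_reg_r (1 + x)); try lra; field_simplify; lra. }
  assert (Hkb : 0 <= kappa_b r <= 1/2).
  { rewrite Ekb. split; apply (Rmult_le_reg_r (1 + y)); try lra; field_simplify; lra. }
  destruct (int_facts _ Hkf) as [Jf1 [Jf2 [Jf3 If]]].
  destruct (int_facts _ Hkb) as [Jb1 [Jb2 [Jb3 Ib]]].
  rewrite If, Ib, Jf3, Jb3, Jf2, Jb2.
  set (jf := Jint (kappa_f r) 1) in *. set (jb := Jint (kappa_b r) 1) in *.
  assert (Eqfp : qfp r = 1 + x) by reflexivity. assert (Eqfm : qfm r = 1 - x) by reflexivity.
  assert (Eqbp : qbp r = 1 + y) by reflexivity. assert (Eqbm : qbm r = 1 - y) by reflexivity.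
  set (S := 3 * x + 3 * y - 2).
  assert (HS : 0 < S) by (unfold S; lra).
  assert (ESr : Sr r = S) by (unfold Sr; rewrite Eqfp, Eqfm, Eqbp, Eqbm; unfold S; ring).
  assert (Emu2 : mu0 r + 2 = (2 - u) * (3 * x - 1) / S).
  { unfold mu0. rewrite ESr, Eqfp, Eqfm. fold u. field. lra. }
  assert (Emub : mu0 r + u = - ((2 - u) * (3 * y - 1) / S)).
  { unfold mu0. rewrite ESr, Eqfp, Eqfm. fold u. unfold S. field. unfold S in HS. lra. }
  assert (ED0 : D0 r = 2 * (2 - u) ^ 2 / ((r + 1/10) * S ^ 2)).
  { unfold D0. rewrite ESr. reflexivity. }
  rewrite Emu2, Emub, ED0, Eqfp, Eqfm, Eqbp, Eqbm, Ekf, Ekb.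
  assert (Hs0 : 0 < sqrt 2) by (apply sqrt_lt_R0; lra).
  match goal with |- ?L <> 0 => replace L with
    (((3 + y - 6 * y ^ 2) + 3 * (u - 21/10) / (r + 1/10)) * (2 - u) / (2 * y * S)
     + ((6 * x ^ 2 - x - 3) + 3 * (1/10) / (r + 1/10)) * (r + 1/10) * S / (4 * x * (2 - u))) end.
  2:{ unfold S. field. unfold S in HS.
       repeat split; intro Hc; nra. }
  assert (HS' : 17/5 <= S) by (unfold S; lra).
  assert (Hd1 : 6 <= 2 * y * S) by nra.
  assert (Hd1' : 0 < 2 * y * S) by lra.
  assert (Hd3 : 2 <= 4 * x * (2 - u)) by nra.
  assert (Hd4 : 4 * x * (2 - u) <= 4) by nra.
  assert (Hd5 : 30 <= (r + 1/10) * S) by nra.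
  assert (Hd2 : 0 < 4 * x * (2 - u)) by nra.
  replace (((3 + y - 6 * y ^ 2) + 3 * (u - 21/10) / (r + 1/10)) * (2 - u) / (2 * y * S))
    with (((3 + y - 6 * y ^ 2) + 3 * (u - 21/10) / (r + 1/10)) * ((2 - u) / (2 * y * S))) by (field; lra).
  replace (((6 * x ^ 2 - x - 3) + 3 * (1/10) / (r + 1/10)) * (r + 1/10) * S / (4 * x * (2 - u)))
    with (((6 * x ^ 2 - x - 3) + 3 * (1/10) / (r + 1/10)) * ((r + 1/10) * S / (4 * x * (2 - u)))) by (field; lra).
  assert (Hq1 : -3/10 <= 3 * (u - 21/10) / (r + 1/10) < 0) by (apply div_bounds; lra).
  assert (Hq2 : 0 <= 3 * (1/10) / (r + 1/10) < 1) by (apply div_bounds; lra).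
  assert (Hc1 : 0 <= (2 - u) / (2 * y * S) < 1/5) by (apply div_bounds; lra).
  assert (Hc2 : 1 <= (r + 1/10) * S / (4 * x * (2 - u)) < (r + 1/10) * S) by (apply div_bounds; [lra|lra|nra]).
  set (q1 := 3 * (u - 21/10) / (r + 1/10)) in *.
  set (q2 := 3 * (1/10) / (r + 1/10)) in *.
  set (c1 := (2 - u) / (2 * y * S)) in *.
  set (c2 := (r + 1/10) * S / (4 * x * (2 - u))) in *.
  assert (HN1 : -23/10 < 3 + y - 6 * y ^ 2 + q1 < 0) by (split; nra).
  assert (HN2 : 9/10 <= 6 * x ^ 2 - x - 3 + q2) by nra.
  assert (HT1 : -1/2 < (3 + y - 6 * y ^ 2 + q1) * c1) by nra.
  assert (HT2 : 9/10 <= (6 * x ^ 2 - x - 3 + q2) * c2) by nra.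
  lra.
Qed.
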